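(* Consider, for $x\ge0$ and $a>0$, the planar system $$\dot x=1,\qquad \dot y=-ay-\sin\!\left[\pi x\left(1+\tfrac12\lambda\right)\right],$$ with $\lambda=\operatorname{sign}(y)$ for $y\ne0$ and $\lambda\in(-1,1)$ on $y=0$. This system does not have non-sliding periodic solutions.
   Context: For $y>0$ the system is $\dot y=-ay-\sin(3\pi x/2)$ and for $y<0$ it is $\dot y=-ay-\sin(\pi x/2)$. The sliding manifold is $\Lambda^N=\{(x,0):x\in(\frac{2n}{3},2n),\ n\ge1\}$, the set of points of $y=0$ where some $\lambda\in(-1,1)$ gives $\sin[\pi x(1+\lambda/2)]=0$; a solution may remain on $y=0$ (with $\dot x=1$) only while on $\Lambda^N$. A periodic solution is called sliding if part of it lies on $\Lambda^N$ (here: if at least one of its points lies on $\Lambda^N$), and non-sliding otherwise. *)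

(* Defs.v *)
From HB Require Import structures.
From mathcomp Require Import all_boot all_order all_algebra.
From mathcomp Require Import all_classical all_reals all_analysis.
Set Implicit Arguments. Unset Strict Implicit. Unset Printing Implicit Defensive.
Import Order.TTheory GRing.Theory Num.Theory.
Import numFieldNormedType.Exports.
Local Open Scope classical_set_scope.
Local Open Scope ring_scope.

Section Defs.
Variable R : realType.

Definition rhs (a x y lam : R) : R :=
  - a * y - sin (pi * x * (1 + lam / 2)).

Definition admissible_lambda (y lam : R) : Prop :=
  (y > 0 -> lam = 1) /\ (y < 0 -> lam = -1) /\ (y = 0 -> -1 < lam < 1).

Definition in_LambdaN (x : R) : Prop :=
  exists n : nat, (1 <= n)%N /\ (2 * n%:R) / 3 < x /\ x < 2 * n%:R.

(* Since xdot = 1, a solution is parametrised by x: it is a function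
   x |-> y(x) defined for x >= x0 (x0 >= 0).  Solutions are taken in the
   Filippov/Caratheodory sense: y is continuous and, for some selection
   lambda(s) admissible at (s, y(s)), y is the indefinite (Lebesgue)
   integral of rhs a s (y s) (lambda s) on every compact interval. *)
Definition is_solution (a x0 : R) (y : R -> R) : Prop :=
  0 <= x0 /\
  {within [set s | x0 <= s], continuous y} /\
  exists lam : R -> R,
    (forall s, x0 <= s -> admissible_lambda (y s) (lam s)) /\
    forall x1 x2, x0 <= x1 -> x1 <= x2 ->
      (lebesgue_measure).-integrable `[x1, x2]%classic
         (fun s => (rhs a s (y s) (lam s))%:E) /\
      y x2 - y x1 =
        Rintegral lebesgue_measure `[x1, x2]%classic (fun s => rhs a s (y s) (lam s)).

Definition is_periodic_from (x0 : R) (y : R -> R) : Prop :=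
  exists T : R, 0 < T /\ forall x, x0 <= x -> y (x + T) = y x.

Definition is_sliding (x0 : R) (y : R -> R) : Prop :=
  exists x, x0 <= x /\ y x = 0 /\ in_LambdaN x.

End Defs.

(* Main.v *)
Require Import Defs.
From HB Require Import structures.
From mathcomp Require Import all_boot all_order all_algebra.
From mathcomp Require Import all_classical all_reals all_analysis.
From mathcomp Require Import ring lra.
Import Order.TTheory GRing.Theory Num.Theory.
Import numFieldNormedType.Exports.
Local Open Scope classical_set_scope.
Local Open Scope ring_scope.

Section L.
Variable R : realType.

Lemma dcos (c s : R) : derivable (fun t : R => cos (c * t)) s 1 /\
  (fun t : R => cos (c * t))^`()%classic s = - sin (c * s) * c.
Proof.
have h1 : derivable (fun t : R => c * t) s 1.
  by apply: derivableM => //; apply: derivable_id.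
have h2 : derivable (@cos R) (c * s) 1 by exact: derivable_cos.
split.
  apply/derivable1_diffP. 
  apply: (differentiable_comp (f := fun t : R => c * t) (g := @cos R)).
    exact/derivable1_diffP.
  exact/derivable1_diffP.
have := derive1_comp h1 h2. rewrite /comp => ->.
rewrite derive1E derive_val.
congr (_ * _). rewrite derive1E. have -> : ( *%R c) = (fun t => c *: (@id R) t) by []. rewrite deriveZ // derive_id. by rewrite /GRing.scale /= mulr1.
Qed.

Lemma dF (c k e x : R) : 0 < c ->
  let F := (fun t : R => (- k) * t + (- e / c) * cos (c * t)) in
  derivable F x 1 /\ F^`()%classic x = - k + e * sin (c * x).
Proof.
move=> c0 F.
have [d1 d2] := dcos c x.
have dC : is_derive x 1 (fun t => cos (c * t)) (- sin (c * x) * c).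
  by rewrite -d2 derive1E; apply: derivableP.
have dI : is_derive x 1 (fun t : R => t) 1 by exact: is_derive_id.
have H := is_deriveD (is_deriveZ (- k) dI) (is_deriveZ (- e / c) dC).
have -> : F = ((- k) \*: (fun t : R => t)) \+ ((- e / c) \*: (fun t => cos (c * t))).
  by apply/funext => t.
split; first exact: ex_derive.
rewrite derive1E derive_val /GRing.scale /=.
field. exact: lt0r_neq0.
Qed.

Lemma intbound (c k e u v : R) (f : R -> R) : 0 < c -> u < v ->
  (lebesgue_measure).-integrable `[u, v]%classic (fun s => (f s)%:E) ->
  (forall s, u <= s -> s <= v -> f s <= - k + e * sin (c * s)) ->
  Rintegral lebesgue_measure `[u, v]%classic f <= - k * (v - u) + 2 * `|e| / c.
Proof.
move=> c0 uv fi fle.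
pose g := fun s : R => - k + e * sin (c * s).
pose F := (fun t : R => (- k) * t + (- e / c) * cos (c * t)).
have cg : continuous g.
  move=> x; apply: cvgD; first exact: cvg_cst.
  apply: cvgM; first exact: cvg_cst.
  apply: (continuous_comp (f := fun s : R => c * s) (g := @sin R)); last exact: continuous_sin.
  apply: cvgM; first exact: cvg_cst.
  exact: cvg_id.
have cF : continuous F.
  move=> x; apply/differentiable_continuous/derivable1_diffP.
  by have [] := dF c k e x c0.
have gi : (lebesgue_measure).-integrable `[u, v]%classic (EFin \o g).
  apply: continuous_compact_integrable; first exact: segment_compact.
  exact: continuous_subspaceT.
have -> : - k * (v - u) + 2 * `|e| / c =
   (F v - F u) + (e / c * (cos (c * v) - cos (c * u)) + 2 * `|e| / c).
  rewrite /F; field; exact: lt0r_neq0.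
have FTC : Rintegral lebesgue_measure `[u, v]%classic g = F v - F u.
  rewrite /Rintegral (@continuous_FTC2 _ g F) //.
  - exact: continuous_subspaceT.
  - split.
    + by move=> x _; have [] := dF c k e x c0.
    + by apply: cvg_at_right_filter; apply: cF.
    + by apply: cvg_at_left_filter; apply: cF.
  - by move=> x _; have [_ ->] := dF c k e x c0.
apply: le_trans (_ : Rintegral lebesgue_measure `[u, v]%classic g <= _).
  apply: le_Rintegral => //.
  move=> x /=; rewrite in_itv /= => /andP[h1 h2]; exact: fle.
rewrite FTC lerDl.
have -> : 2 * `|e| / c = 2 * (`|e| / c) by rewrite mulrA.
have h1 := cos_le1 (c * v); have h2 := cos_geN1 (c * v).
have h3 := cos_le1 (c * u); have h4 := cos_geN1 (c * u).
have ci : 0 < c^-1 by rewrite invr_gt0.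
have [e0|e0] := lerP 0 e.
  rewrite ger0_norm //.
  have q0 : 0 <= e / c by rewrite mulr_ge0 // ltW.
  nra.
rewrite ltr0_norm // mulNr.
have q0 : e / c <= 0 by rewrite nmulr_rle0 // ?ltW.
nra.
Qed.

Lemma archi_T (T r : R) : 0 < T -> exists N : nat, r < N%:R * T.
Proof.
move=> T0; exists (Num.bound (`|r| / T)).
have h := @archi_boundP _ (`|r| / T) (divr_ge0 (normr_ge0 r) (ltW T0)).
have h2 := ler_norm r.
apply: le_lt_trans (_ : r <= `|r| / T * T) _.
  by rewrite divfK // lt0r_neq0.
by rewrite ltr_pM2r.
Qed.

Lemma inL_aux (n : nat) (x : R) : 2 / 3 < x -> x < 2 * (n.+1)%:R -> in_LambdaN x.
Proof.
elim: n x => [|n IH] x h1 h2.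
  by exists 1%N; split => //; split; rewrite // mulr1.
have [h3|h3] := ltP x (2 * (n.+1)%:R); first exact: IH.
exists n.+2; split => //; split => //.
have e1 : (n.+1)%:R = n%:R + 1 :> R by rewrite natr1.
have e2 : (n.+2)%:R = n%:R + 2 :> R by rewrite -natr1 -natr1 -addrA.
rewrite e2; rewrite e1 in h3.
have : 0 <= n%:R :> R by [].
lra.
Qed.

Lemma inL (x : R) : 2 / 3 < x -> in_LambdaN x.
Proof.
move=> h.
have [N hN] := @archi_T 2 x (ltr0Sn _ 1).
apply: (@inL_aux N) => //.
have e : N.+1%:R = N%:R + 1 :> R by rewrite natr1.
rewrite e; have : 0 <= N%:R :> R by [].
nra.
Qed.

Lemma core (sg c k e u T : R) (f : R -> R) : 0 < c -> 0 < k -> 0 < T ->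
  (forall N : nat, (lebesgue_measure).-integrable `[u, u + N%:R * T]%classic
       (fun s => (f s)%:E) /\
     Rintegral lebesgue_measure `[u, u + N%:R * T]%classic f = 0) ->
  (forall s, u <= s -> sg * f s <= - k + e * sin (c * s)) -> False.
Proof.
move=> c0 k0 T0 hI hb.
have [N hN] := @archi_T (k * T) (2 * `|e| / c) (mulr_gt0 k0 T0).
have r0 : 0 <= 2 * `|e| / c by rewrite !divr_ge0 ?mulr_ge0 ?normr_ge0 // ltW.
have N1 : (1 <= N)%N.
  case: N hN => // hN; exfalso; move: hN; rewrite mul0r => hN.
  lra.
have [fi f0] := hI N.
have NT : 0 < N%:R * T by rewrite mulr_gt0 // ltr0n.
have fi' : (lebesgue_measure).-integrable `[u, u + N%:R * T]%classic
     (fun s => (sg * f s)%:E).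
  apply: (eq_integrable _ _ _ _ (integrableZl _ sg fi)) => //= x _.
have := @intbound c k e u (u + N%:R * T) (fun s => sg * f s) c0 _ fi'.
rewrite RintegralZl // f0 mulr0.
have hlt : u < u + N%:R * T by rewrite ltrDl.
move=> /(_ hlt (fun s h _ => hb s h)).
have -> : u + N%:R * T - u = N%:R * T by rewrite addrC addKr.
have e1 : N%:R * (k * T) = k * (N%:R * T) by rewrite mulrCA.
rewrite e1 in hN.
move: hN r0; set q := 2 * `|e| / c; set w := N%:R * T => hN r0.
lra.
Qed.

Lemma per_iter (y : R -> R) x0 T : 0 <= T ->
  (forall x, x0 <= x -> y (x + T) = y x) ->
  forall N : nat, forall x, x0 <= x -> y (x + N%:R * T) = y x.
Proof.
move=> T0 hp; elim=> [|N IH] x hx; first by rewrite mul0r addr0.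
have -> : x + N.+1%:R * T = (x + N%:R * T) + T by rewrite -natr1; ring.
rewrite hp ?IH //.
apply: le_trans hx _; rewrite lerDl; exact: mulr_ge0.
Qed.

Lemma lowb (w : R -> R) x0 T m : 0 < T ->
  (forall x, x0 <= x -> w (x + T) = w x) ->
  (forall t, x0 <= t -> t <= x0 + T -> m <= w t) ->
  forall s, x0 <= s -> m <= w s.
Proof.
move=> T0 hp hb.
have H : forall N : nat, forall s, x0 <= s -> s <= x0 + N.+1%:R * T -> m <= w s.
  elim=> [|N IH] s h1 h2; first by apply: hb => //; rewrite mul1r in h2.
  have [h3|h3] := leP s (x0 + T); first exact: hb.
  have -> : s = (s - T) + T by rewrite subrK.
  rewrite hp; last by lra.
  apply: IH; first by lra.
  move: h2; rewrite -[N.+2]addn1 natrD mulrDl mul1r; lra.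
move=> s hs.
have [N hN] := @archi_T T (s - x0) T0.
apply: (H N) => //.
have : N%:R * T <= N.+1%:R * T.
  by rewrite ler_pM2r // ler_nat.
lra.
Qed.

Lemma sub_itv x0 s : `[x0, s]%classic `<=` [set t : R | x0 <= t].
Proof. by move=> t /=; rewrite in_itv /= => /andP[]. Qed.

End L.

Theorem theorem3 (R : realType) (a : R) (ha : 0 < a) (x0 : R) (y : R -> R) :
  is_solution a x0 y -> is_periodic_from x0 y -> is_sliding x0 y.
Proof.
move=> [x00 [cy [lam [hadm hint]]]] [T [T0 hper]].
have PI := @per_iter R y x0 T (ltW T0) hper.
suff [z [hz0 hz]] : exists z, x0 <= z /\ y z = 0.
  have [N hN] := @archi_T R T (2 / 3 - z) T0.
  exists (z + N%:R * T); split; last split.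
  - have : 0 <= N%:R * T by rewrite mulr_ge0 // ltW.
    lra.
  - by rewrite PI.
  - apply: inL; lra.
have [//|hne] := pselect (exists z, x0 <= z /\ y z = 0).
exfalso.
have nz : forall s, x0 <= s -> y s != 0.
  by move=> s hs; apply/eqP => h; apply: hne; exists s.
pose f := fun s => rhs a s (y s) (lam s).
have hI : forall N : nat,
   (lebesgue_measure).-integrable `[x0, x0 + N%:R * T]%classic (fun s => (f s)%:E) /\
   Rintegral lebesgue_measure `[x0, x0 + N%:R * T]%classic f = 0.
  move=> N.
  have hNT : x0 <= x0 + N%:R * T by rewrite lerDl mulr_ge0 // ltW.
  have [i e] := hint x0 (x0 + N%:R * T) (lexx x0) hNT.
  split => //; rewrite /f -e PI ?subrr //.
have cyI : forall s, {within `[x0, s]%classic, continuous y}.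
  move=> s; exact: continuous_subspaceW (@sub_itv R x0 s) cy.
have := nz x0 (lexx x0); rewrite neq_lt => /orP[yn|yp].
- have neg : forall s, x0 <= s -> y s < 0.
    move=> s hs; rewrite ltNge; apply/negP => hle.
    have ys : 0 < y s by rewrite lt_neqAle eq_sym nz.
    have [c cI yc] := @IVT R y x0 s 0 hs (cyI s) ltac:(rewrite ge_min le_max; apply/andP; split; apply/orP; [left|right]; exact: ltW).
    move: cI; rewrite in_itv /= => /andP[c1 _].
    by move: (nz c c1); rewrite yc eqxx.
  have [c cI cmax] := @EVT_max R y x0 (x0 + T) ltac:(rewrite lerDl ltW //) (cyI _).
  move: (cI); rewrite in_itv /= => /andP[c1 _].
  have lb := @lowb R (fun s => - y s) x0 T (- y c) T0
    (fun x hx => congr1 -%R (hper x hx))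
    (fun t h1 h2 => ltac:(rewrite lerN2; apply: cmax; rewrite in_itv /= h1 h2 //)).
  have hc := neg c c1.
  apply: (@core R (-1) (pi * (1 + -1 / 2)) (a * - y c) 1 x0 T f) => //.
  + by rewrite mulr_gt0 ?pi_gt0 //; lra.
  + by rewrite mulr_gt0 // oppr_gt0.
  + move=> s hs; have [_ [h2 _]] := hadm s hs.
    rewrite /f (h2 (neg s hs)) /rhs.
    have -> : pi * (1 + -1 / 2) * s = pi * s * (1 + -1 / 2) by rewrite mulrAC.
    have := lb s hs; rewrite /= => hl.
    set sn := sin _; nra.
- have pos : forall s, x0 <= s -> 0 < y s.
    move=> s hs; rewrite ltNge; apply/negP => hle.
    have ys : y s < 0 by rewrite lt_neqAle nz.
    have [c cI yc] := @IVT R y x0 s 0 hs (cyI s) ltac:(rewrite ge_min le_max; apply/andP; split; apply/orP; [right|left]; exact: ltW).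
    move: cI; rewrite in_itv /= => /andP[c1 _].
    by move: (nz c c1); rewrite yc eqxx.
  have [c cI cmin] := @EVT_min R y x0 (x0 + T) ltac:(rewrite lerDl ltW //) (cyI _).
  move: (cI); rewrite in_itv /= => /andP[c1 _].
  have lb := @lowb R y x0 T (y c) T0 hper
    (fun t h1 h2 => ltac:(apply: cmin; rewrite in_itv /= h1 h2 //)).
  have hc := pos c c1.
  apply: (@core R 1 (pi * (1 + 1 / 2)) (a * y c) (-1) x0 T f) => //.
  + by rewrite mulr_gt0 ?pi_gt0 //; lra.
  + by rewrite mulr_gt0.
  + move=> s hs; have [h1 _] := hadm s hs.
    rewrite /f (h1 (pos s hs)) /rhs.
    have -> : pi * (1 + 1 / 2) * s = pi * s * (1 + 1 / 2) by rewrite mulrAC.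
    have hl := lb s hs.
    set sn := sin _; nra.
Qed.
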